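(* Let $G$ be a graph, let $L$ be a set of specified leaks on $V(G)$, and let $\ell=I(L)$. Then every specified $\ell$-leaky forcing set of $G$ is an $L$-leaky forcing set of $G$. Consequently $\operatorname{Z}_{(L)}(G)\le \operatorname{Z}^s_{(\ell)}(G)$.
   Context: All graphs are finite, simple and undirected. Zero forcing: a blue vertex $u$ with exactly one white neighbor $w$ may force $w$ (color it blue), written $u\to w$. A specified leak on $V(G)$ is an ordered pair $x\to y$ of vertices, meaning $x$ (the tail) is prohibited from forcing $y$ (the head); a set of specified leaks is thus the arc set of a directed graph on $V(G)$. For a set $L$ of specified leaks, $T(L)$ and $H(L)$ denote its sets of tails and heads. $B$ is a specified $\ell$-leaky forcing set if for every set of at most $\ell$ specified leaks, exhaustively applying the forcing rule from initial blue set $B$ without performing prohibited forces colors all of $V(G)$ blue; $\operatorname{Z}^s_{(\ell)}(G)$ is the minimum size of such a set. Two sets $L_1,L_2$ of specified leaks on $V(G)$ are isomorphic if there is a bijection $\phi:V(G)\to V(G)$ with $x\to y\in L_1$ iff $\phi(x)\to\phi(y)\in L_2$. $B$ is an $L$-leaky forcing set if $B$ colors all of $G$ blue (never performing prohibited forces) despite any set $L_1$ of specified leaks isomorphic to some subset $L_2\subseteq L$; $\operatorname{Z}_{(L)}(G)$ is the minimum size of such a set. A set $L$ of specified leaks is independent if $|T(L)|=|L|$ and $T(L)\cap H(L)=\varnothing$. $I(L)$ is the maximum size of an independent subset of $L$. *)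

(* Defs.v *)
From mathcomp Require Import all_boot.
From Stdlib Require Import ClassicalDescription.
Set Implicit Arguments. Unset Strict Implicit. Unset Printing Implicit Defensive.

Definition propb (P : Prop) : bool :=
  if excluded_middle_informative P then true else false.

Section LeakyForcing.
Variables (T : finType) (e : rel T).

(* A set of specified leaks is a set of ordered pairs (x, y) = "x -> y":
   x (tail) is prohibited from forcing y (head). *)

Definition force_step (L : {set T * T}) (S S' : {set T}) : bool :=
  [exists u, exists w,
    [&& u \in S, w \notin S, e u w,
        [forall v, e u v ==> (v \in S) || (v == w)],
        (u, w) \notin L & S' == w |: S]].

Definition stalled (L : {set T * T}) (S : {set T}) : bool :=
  [forall S', ~~ force_step L S S'].

(* B colors all of G despite the leaks L: exhaustively applying allowed
   forces (in any order) from B ends with every vertex blue. *)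
Definition forces_despite (L : {set T * T}) (B : {set T}) : Prop :=
  forall S, connect (force_step L) B S -> stalled L S -> S = [set: T].

Definition spec_leaky_forcing (l : nat) (B : {set T}) : Prop :=
  forall L : {set T * T}, #|L| <= l -> forces_despite L B.

Definition leak_iso (L1 L2 : {set T * T}) : Prop :=
  exists phi : T -> T, bijective phi /\
    forall x y, ((x, y) \in L1) = ((phi x, phi y) \in L2).

Definition L_leaky_forcing (L : {set T * T}) (B : {set T}) : Prop :=
  forall L1 L2 : {set T * T}, L2 \subset L -> leak_iso L1 L2 ->
    forces_despite L1 B.

Definition tails (L : {set T * T}) : {set T} := [set p.1 | p in L].
Definition heads (L : {set T * T}) : {set T} := [set p.2 | p in L].

Definition independent_leaks (L : {set T * T}) : bool :=
  (#|tails L| == #|L|) && [disjoint tails L & heads L].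

Definition I_leaks (L : {set T * T}) : nat :=
  \max_(L' in powerset L | independent_leaks L') #|L'|.

(* Minimum sizes; the default #|T| is attained by [set: T], which is
   always a forcing set of both kinds, so these are true minima. *)
Definition Zs (l : nat) : nat :=
  \big[minn/#|T|]_(B : {set T} | propb (spec_leaky_forcing l B)) #|B|.

Definition ZL (L : {set T * T}) : nat :=
  \big[minn/#|T|]_(B : {set T} | propb (L_leaky_forcing L B)) #|B|.
End LeakyForcing.

(* Main.v *)
Require Import Defs.
From mathcomp Require Import all_boot.
From Stdlib Require Import ClassicalDescription.

Lemma bigmin_le (T : finType) (P : pred T) (F : T -> nat) m x :
  P x -> \big[minn/m]_(i | P i) F i <= F x.
Proof.
move=> Px; have : x \in index_enum T := mem_index_enum x.
elim: (index_enum T) => //= a s IH; rewrite inE big_cons => /orP[/eqP <-|hx].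
  by rewrite Px geq_minl.
case: (P a); last exact: IH.
by rewrite geq_min IH ?orbT.
Qed.

Lemma bigmin_idx (T : finType) (P : pred T) (F : T -> nat) m :
  \big[minn/m]_(i | P i) F i <= m.
Proof.
elim: (index_enum T) => [|a s IH]; first by rewrite big_nil.
by rewrite big_cons; case: (P a) => //; rewrite geq_min IH orbT.
Qed.

Theorem theorem5p1 (T : finType) (e : rel T)
  (e_sym : symmetric e) (e_irr : irreflexive e)
  (L : {set T * T}) (l : nat) (hl : l = I_leaks L) :
  (forall B : {set T}, spec_leaky_forcing e l B -> L_leaky_forcing e L B) /\
  ZL e L <= Zs e l.
Proof.
have part1 : forall B : {set T}, spec_leaky_forcing e l B -> L_leaky_forcing e L B.
  move=> B hB L1 L2 hsub [phi [bphi hiso]] S hconn hstall.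
  have phiI : injective phi by apply: bij_inj.
  pose good (p : T * T) := [&& p.1 \in S, p.2 \notin S, e p.1 p.2 &
      [forall v, e p.1 v ==> (v \in S) || (v == p.2)]].
  pose L' := [set p in L1 | good p].
  apply: (hB L').
  - pose f (p : T * T) := (phi p.1, phi p.2).
    have fI : injective f by move=> [a b] [c d] [/phiI -> /phiI ->].
    have -> : #|L'| = #|f @: L'| by rewrite card_imset.
    rewrite hl /I_leaks; apply: (@leq_bigmax_cond _ (fun A : {set T * T} => (A \in powerset L) && independent_leaks A) (fun A => #|A|)).
    apply/andP; split.
      rewrite powersetE; apply/subsetP => q /imsetP[p]; rewrite inE => /andP[p1 _] ->.
      apply: (subsetP hsub); by rewrite /f -hiso -surjective_pairing.
    have uniqw : forall p q, p \in L' -> q \in L' -> p.1 = q.1 -> p = q.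
      move=> [a b] [c d]; rewrite !inE /good /= => /andP[_ /and4P[aS bS eab /forallP fa]]
        /andP[_ /and4P[cS dS ecd _]] eac; subst c.
      move: (fa d); rewrite ecd /= (negbTE dS) /= => /eqP -> //.
    apply/andP; split.
      rewrite /tails -imset_comp (card_imset _ fI) card_in_imset ?eqxx //.
      move=> p q hp hq /= /phiI h; exact: uniqw.
    rewrite -setI_eq0; apply/eqP/setP => x; rewrite !inE.
    apply/negbTE/negP => /andP[/imsetP[p /imsetP[a ha ->] ->] /imsetP[q /imsetP[b hb ->] /= h]].
    move: h => /phiI h.
    move: ha hb; rewrite !inE /good => /andP[_ /and4P[aS _ _ _]] /andP[_ /and4P[_ bS _ _]].
    by rewrite h (negbTE bS) in aS.
  - apply: (connect_sub _ hconn) => S0 S1 hs; apply: connect1.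
    move: hs => /existsP[u /existsP[w /and5P[h1 h2 h3 h4 /andP[h5 h6]]]].
    apply/existsP; exists u; apply/existsP; exists w.
    rewrite h1 h2 h3 h4 h6 /= andbT; apply: contra h5; by rewrite inE => /andP[].
  - apply/forallP => S'; apply/negP => /existsP[u /existsP[w /and5P[h1 h2 h3 h4 /andP[h5 h6]]]].
    move/forallP: hstall => /(_ S') /negP; apply.
    apply/existsP; exists u; apply/existsP; exists w.
    rewrite h1 h2 h3 h4 h6 /= andbT.
    apply: contra h5 => hL; by rewrite inE hL /good /= h1 h2 h3 h4.
split => //.
rewrite /Zs; apply: (big_ind (fun x => ZL e L <= x)).
- exact: bigmin_idx.
- by move=> x y hx hy; rewrite leq_min hx hy.
- move=> B; rewrite /propb; case: excluded_middle_informative => // hB _.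
  apply: bigmin_le; rewrite /propb; case: excluded_middle_informative => //.
  by move=> []; apply: part1.
Qed.
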